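(* Let $K$ be a compact Hausdorff space without isolated points. Then the pair $(C(K),m_0(K))$ has the Daugavet property, where $C(K)$ is regarded as a subspace of $m_0(K)$ via the quotient map $\ell_\infty(K)\to m_0(K)$.
   Context: For a compact Hausdorff space $K$: $\ell_\infty(K)$ is the space of bounded real functions on $K$ with the sup norm; $m(K)=\{f\in\ell_\infty(K): \mathrm{supp}(f)\text{ is a first category set in }K\}$; $m_0(K)=\ell_\infty(K)/m(K)$ with the quotient norm; the quotient map restricted to $C(K)$ is an isometric embedding. If $X$ is a closed subspace of a Banach space $Y$ with inclusion $J$, the pair $(X,Y)$ has the Daugavet property if every bounded rank-one linear operator $T:X\to Y$ satisfies $\|J+T\|=1+\|T\|$. *)

(* Defs.v *)
From HB Require Import structures.
From mathcomp Require Import all_boot all_order all_algebra.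
From mathcomp Require Import all_classical all_reals all_analysis.
Set Implicit Arguments. Unset Strict Implicit. Unset Printing Implicit Defensive.
Import Order.TTheory GRing.Theory Num.Theory numFieldNormedType.Exports.
Local Open Scope classical_set_scope.
Local Open Scope ring_scope.

Section Defs.
Context {R : realType} {K : topologicalType}.

Definition nowhere_dense (A : set K) : Prop := (closure A)° = set0.

Definition first_category (A : set K) : Prop :=
  exists F : nat -> set K, (forall n, nowhere_dense (F n)) /\ A `<=` \bigcup_n F n.

Definition supp (f : K -> R) : set K := [set x | f x != 0].

Definition bounded_fun (f : K -> R) : Prop := exists M : R, forall x, `|f x| <= M.

Definition mK (f : K -> R) : Prop := bounded_fun f /\ first_category (supp f).

Definition supn (f : K -> R) : \bar R := ereal_sup [set (`|f x|)%:E | x in [set: K]].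

(* quotient norm of the class of f in m_0(K) = l_oo(K)/m(K) *)
Definition qnorm (f : K -> R) : \bar R :=
  ereal_inf [set supn (f \- g) | g in mK].

(* operator norm of a map C(K) -> m_0(K) given on representatives *)
Definition opnorm (T : (K -> R) -> (K -> R)) : \bar R :=
  ereal_sup [set qnorm (T x) | x in [set x : K -> R | continuous x /\ (supn x <= 1)%E]].

Definition rank_one_op (T : (K -> R) -> (K -> R)) : Prop :=
  [/\ (forall x, continuous x -> bounded_fun (T x)),
      (forall (a : R) x y, continuous x -> continuous y ->
          mK (T (a *: x + y) - (a *: T x + T y))),
      (exists M : R, forall x, continuous x -> (qnorm (T x) <= M%:E * supn x)%E),
      (exists2 x0, continuous x0 & ~ mK (T x0)) &
      (exists2 y, bounded_fun y &
         forall x, continuous x -> exists c : R, mK (T x - c *: y))].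

End Defs.

(* Main.v *)
Require Import Defs.
From HB Require Import structures.
From mathcomp Require Import all_boot all_order all_algebra.
From mathcomp Require Import all_classical all_reals all_analysis.
From mathcomp Require Import ring lra.
Import Order.TTheory GRing.Theory Num.Theory numFieldNormedType.Exports.
Local Open Scope classical_set_scope.
Local Open Scope ring_scope.

Section S.
Context {R : realType} {K : topologicalType}.
Implicit Types (A B : set K) (f g : K -> R).

Lemma nd_sub {A B} : B `<=` A -> nowhere_dense A -> nowhere_dense B.
Proof.
move=> BA; rewrite /nowhere_dense -!subset0 => H.
by apply: subset_trans H; apply: interiorS; apply: closureS.
Qed.

Lemma nd0 : nowhere_dense (@set0 K).
Proof. by rewrite /nowhere_dense closure0 interior0. Qed.

Lemma fc_sub {A B} : B `<=` A -> first_category A -> first_category B.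
Proof. by move=> BA [F [HF AF]]; exists F; split => //; apply: subset_trans AF. Qed.

Lemma fc0 : first_category (@set0 K).
Proof. by exists (fun=> set0); split => // _; exact: nd0. Qed.

Lemma fcU {A B} : first_category A -> first_category B -> first_category (A `|` B).
Proof.
move=> [F [HF AF]] [G [HG BG]].
exists (fun n => if odd n then G n./2 else F n./2); split.
  by move=> n; case: ifP.
move=> t [/AF [n _ Fn]|/BG [n _ Gn]].
  by exists n.*2 => //=; rewrite odd_double doubleK.
exists n.*2.+1 => //=; rewrite /= odd_double /=.
by rewrite uphalf_double.
Qed.

Lemma bd0 : Defs.bounded_fun (0 : K -> R).
Proof. by exists 0 => x; rewrite normr0. Qed.

Lemma bdD f g : Defs.bounded_fun f -> Defs.bounded_fun g -> Defs.bounded_fun (f + g).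
Proof.
move=> [M HM] [N HN]; exists (M + N) => x /=.
by rewrite (le_trans (ler_normD _ _))// lerD.
Qed.

Lemma bdZ (c : R) f : Defs.bounded_fun f -> Defs.bounded_fun (c *: f).
Proof.
move=> [M HM]; exists (`|c| * M) => x /=.
by rewrite normrM ler_wpM2l.
Qed.

Lemma mK0 : mK (0 : K -> R).
Proof.
split; first exact: bd0.
by apply: (fc_sub _ fc0) => x; rewrite /supp /= eqxx.
Qed.

Lemma mKD f g : mK f -> mK g -> mK (f + g).
Proof.
move=> [bf sf] [bg sg]; split; first exact: bdD.
apply: (fc_sub _ (fcU sf sg)) => x; rewrite /supp /=.
have -> : (f + g) x = f x + g x by [].
by case: (eqVneq (f x) 0) => [->|]; [rewrite add0r; right|left].
Qed.

Lemma mKZ (c : R) f : mK f -> mK (c *: f).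
Proof.
move=> [bf sf]; split; first exact: bdZ.
apply: (fc_sub _ sf) => x; rewrite /supp /= mulf_eq0 negb_or.
by case/andP.
Qed.

Lemma mKN f : mK f -> mK (- f).
Proof. by move=> /(mKZ (-1)); rewrite scaleN1r. Qed.

Lemma mKB f g : mK f -> mK g -> mK (f - g).
Proof. by move=> mf mg; apply: mKD => //; exact: mKN. Qed.


Lemma supn_ub f t : ((`|f t|)%:E <= supn f)%E.
Proof. by apply: ereal_sup_ubound; exists t. Qed.

Lemma supn_le f (c : R) : (forall t, `|f t| <= c) -> (supn f <= c%:E)%E.
Proof. by move=> H; apply/ereal_supP => _ [t _ <-]; rewrite lee_fin. Qed.

Lemma supn_ge0 (k0 : K) f : (0 <= supn f)%E.
Proof. by apply: le_trans (supn_ub f k0). Qed.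

Lemma supnZ (k0 : K) (c : R) f : supn (c *: f) = ((`|c|)%:E * supn f)%E.
Proof.
rewrite /supn -ereal_supZl//; last first.
  by apply/set0P; exists (`|f k0|)%:E; exists k0.
congr ereal_sup; rewrite image_comp; apply: eq_imagel => x _ /=.
by rewrite normrM EFinM.
Qed.

Lemma supnD f g : (supn (f + g)%R <= supn f + supn g)%E.
Proof.
apply/ereal_supP => _ [t _ <-].
apply: le_trans (leeD (supn_ub f t) (supn_ub g t)).
by rewrite -EFinD lee_fin ler_normD.
Qed.

Lemma qnorm_le f g : mK g -> (qnorm f <= supn (f - g)%R)%E.
Proof. by move=> mg; apply: ereal_inf_lbound; exists g. Qed.

Lemma qnorm_ge0 (k0 : K) f : (0 <= qnorm f)%E.
Proof. by apply/ereal_infP => _ [g _ <-]; exact: supn_ge0. Qed.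

Lemma supn_bd f : Defs.bounded_fun f -> exists M : R, (supn f <= M%:E)%E.
Proof. by move=> [M HM]; exists M; exact: supn_le. Qed.

Lemma qnorm_bd f : Defs.bounded_fun f -> exists M : R, (qnorm f <= M%:E)%E.
Proof.
move=> /supn_bd [M HM]; exists M; apply: le_trans HM.
by rewrite -[X in supn X]subr0; apply: qnorm_le; exact: mK0.
Qed.

Lemma qnorm_inv_le f h : mK h -> (qnorm (f + h)%R <= qnorm f)%E.
Proof.
move=> mh; apply/ereal_infP => _ [g mg <-].
have -> : f \- g = f + h - (g + h).
  by apply/funext => x /=; rewrite opprD addrACA subrr addr0.
by apply: qnorm_le; exact: mKD.
Qed.

Lemma qnorm_inv f h : mK h -> qnorm (f + h) = qnorm f.
Proof.
move=> mh; apply/eqP; rewrite eq_le qnorm_inv_le//=.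
by rewrite -{1}(addrK h f); apply: qnorm_inv_le; exact: mKN.
Qed.

Lemma qnorm_LB (D : set K) F (c : R) : ~ first_category D ->
  (forall t, D t -> c <= `|F t|) -> (c%:E <= qnorm F)%E.
Proof.
move=> nD HD; apply/ereal_infP => _ [g [_ sg] <-].
have [t Dt gt0] : exists2 t, D t & g t = 0.
  apply: contra_notP nD => H; apply: (fc_sub _ sg) => t Dt.
  by rewrite /supp /=; apply/eqP => gt; apply: H; exists t.
apply: le_trans (supn_ub _ t); rewrite lee_fin.
by rewrite /= gt0 subr0; exact: HD.
Qed.

Lemma qnormZ (k0 : K) (c : R) f : qnorm (c *: f) = ((`|c|)%:E * qnorm f)%E.
Proof.
have [->|c0] := eqVneq c 0.
  rewrite normr0 mul0e scale0r; apply/eqP; rewrite eq_le qnorm_ge0// andbT.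
  apply: le_trans (qnorm_le _ _ mK0) _.
  rewrite subr0.
  by apply: supn_le => t; rewrite /= normr0.
have ac0 : 0 < `|c| by rewrite normr_gt0.
rewrite /qnorm -ereal_inf_pZl//; congr ereal_inf; apply/seteqP; split.
  move=> _ [g mg <-]; exists (supn (f - c^-1 *: g)).
    by exists (c^-1 *: g) => //; exact: mKZ.
  have -> : c *: f \- g = c *: (f - c^-1 *: g).
    by rewrite scalerBr scalerA mulfV// scale1r.
  by rewrite supnZ.
move=> _ [_ [g mg <-] <-]; exists (c *: g); first exact: mKZ.
have -> : c *: f \- c *: g = c *: (f \- g) by rewrite scalerBr.
by rewrite supnZ.
Qed.

End S.
Section S.
Context {K : topologicalType}.
Implicit Types (A B : set K).

Lemma banach A : ~ first_category A ->
  exists V : set K, [/\ open V, V !=set0 &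
    forall W, open W -> W !=set0 -> W `<=` V -> ~ first_category (A `&` W)].
Proof.
apply: contra_notP => H.
have key : forall V, open V -> V !=set0 -> exists W, [/\ open W, W !=set0,
    W `<=` V & first_category (A `&` W)].
  move=> V oV V0; apply: contra_notP H => H; exists V; split => // W oW W0 WV fW.
  by apply: H; exists W.
pose P (Ws : set (set K)) := (forall W, Ws W -> [/\ open W, W !=set0 &
    first_category (A `&` W)]) /\
  (forall W1 W2, Ws W1 -> Ws W2 -> W1 <> W2 -> W1 `&` W2 = set0).
have [Ws [[PWs1 PWs2] Wsmax]] : exists Ws, P Ws /\ forall Bs, Ws `<` Bs -> ~ P Bs.
  apply: Zorn_bigcup => F FP Ftot; split.
    by move=> W [X FX XW]; have [+ _] := FP X FX; apply.
  move=> W1 W2 [X1 FX1 XW1] [X2 FX2 XW2].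
  have [X12|X21] := Ftot X1 X2 FX1 FX2.
    by have [_ +] := FP X2 FX2; apply => //; exact: X12.
  by have [_ +] := FP X1 FX1; apply => //; exact: X21.
pose U := \bigcup_(W in Ws) W.
have oU : open U by apply: bigcup_open => W /PWs1 [].
have dense : forall O, open O -> O !=set0 -> O `&` U !=set0.
  move=> O oO O0; apply/set0P/negP => /eqP OU.
  have [W [oW W0 WO fW]] := key O oO O0.
  have WnWs : ~ Ws W.
    move=> WsW; case: W0 => w Ww.
    have : (O `&` U) w by split; [exact: WO|exists W].
    by rewrite OU.
  apply: (Wsmax (Ws `|` [set W])).
    split; first by move=> X WX; left.
    by move=> /(_ W (or_intror erefl)).
  split.
    by move=> X [/PWs1 //|->]; split.
  move=> W1 W2 [H1|->] [H2|->] neq //.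
  - exact: PWs2.
  - apply/seteqP; split => // w [W1w Ww].
    by rewrite -OU; split; [exact: WO | exists W1].
  - apply/seteqP; split => // w [Ww W2w].
    by rewrite -OU; split; [exact: WO | exists W2].
have [FF HFF] : {FF : set K -> nat -> set K & forall W, Ws W ->
    (forall n, nowhere_dense (FF W n)) /\ A `&` W `<=` \bigcup_n FF W n}.
  apply: (@choice _ _ (fun W F => Ws W ->
    (forall n, nowhere_dense (F n)) /\ A `&` W `<=` \bigcup_n F n)) => W; have [WsW|nWs] := pselect (Ws W).
    have [_ _ [F HF]] := PWs1 W WsW; by exists F.
  by exists (fun=> set0).
pose G n := \bigcup_(W in Ws) (FF W n `&` W).
exists (fun n => if n is m.+1 then G m else ~` U); split.
  case=> [|n].
    rewrite /nowhere_dense.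
    have <- : ~` U = closure (~` U) by apply/closure_id; exact: open_closedC.
    rewrite -subset0 => t; rewrite /interior /= nbhsE; case=> O [oO Ot] OU.
    have [z [Oz Uz]] := dense O oO (ex_intro _ t Ot).
    exact: OU z Oz Uz.
  rewrite /nowhere_dense -subset0 => t Ht.
  pose O := (closure (G n))°.
  have oO : open O by exact: open_interior.
  have [z [Oz [W WsW Wz]]] := dense O oO (ex_intro _ t Ht).
  have [oW W0 _] := PWs1 W WsW.
  have sub : O `&` W `<=` closure (FF W n).
    move=> w [Ow Ww] B nB.
    have Hw : closure (G n) w by exact: interior_subset.
    have nBW : nbhs w (B `&` W).
      by apply: filterI => //; apply: open_nbhs_nbhs; split.
    have [v [[W' WsW' [Fv W'v]] [Bv Wv]]] := Hw _ nBW.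
    have eW : W' = W.
      have [//|neq] := pselect (W' = W).
      have := PWs2 W' W WsW' WsW neq.
      by move/seteqP => [/(_ v (conj W'v Wv))].
    by exists v; split => //; rewrite -eW.
  have [nd _] := HFF W WsW.
  have := nd n; rewrite /nowhere_dense -subset0 => nd'.
  suff : (closure (FF W n))° z by move/nd'.
  rewrite /interior /= nbhsE; exists (O `&` W) => //; split => //.
  exact: openI.
move=> t At; have [Ut|nUt] := pselect (U t); last by exists 0%N.
case: Ut => W WsW Wt.
have [_ cov] := HFF W WsW.
have [n _ Fn] := cov t (conj At Wt).
by exists n.+1 => //=; exists W.
Qed.
End S.
Section S.
Context {K : topologicalType}.
Hypothesis hK : hausdorff_space K.
Hypothesis noiso : forall x : K, ~ open [set x].

Lemma split2 (V : set K) : open V -> V !=set0 -> exists V1 V2, [/\ open V1, open V2,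
  V1 !=set0, V2 !=set0 & [/\ V1 `<=` V, V2 `<=` V & V1 `&` V2 = set0]].
Proof.
move=> oV [p Vp].
have [q Vq qp] : exists2 q, V q & q != p.
  apply: contra_notP (noiso p) => H.
  have -> : [set p] = V.
    apply/seteqP; split => [x -> //|x Vx].
    by apply: contra_notP H => xp; exists x => //; apply/eqP.
  exact: oV.
have hK' := hK; move: hK'; rewrite open_hausdorff => /(_ p q).
rewrite eq_sym => /(_ qp) [[A B] /= [pA qB] [oA oB /eqP AB]].
rewrite inE in pA; rewrite inE in qB.
exists (V `&` A), (V `&` B); split; [exact: openI|exact: openI|by exists p|by exists q|split].
- by move=> x [].
- by move=> x [].
- by apply/seteqP; split => // x [[_ Ax] [_ Bx]]; rewrite -AB.
Qed.

Lemma pieces (V : set K) : open V -> V !=set0 -> exists W : nat -> set K,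
  (forall n, [/\ open (W n), W n !=set0 & W n `<=` V]) /\
  (forall n m, n != m -> W n `&` W m = set0).
Proof.
move=> oV V0.
have [sp Hsp] : {sp : set K -> set K * set K & forall X, open X -> X !=set0 ->
   [/\ open (sp X).1, open (sp X).2, (sp X).1 !=set0, (sp X).2 !=set0 &
       [/\ (sp X).1 `<=` X, (sp X).2 `<=` X & (sp X).1 `&` (sp X).2 = set0]]}.
  apply: (@choice _ _ (fun X (p : set K * set K) => open X -> X !=set0 ->
   [/\ open p.1, open p.2, p.1 !=set0, p.2 !=set0 &
       [/\ p.1 `<=` X, p.2 `<=` X & p.1 `&` p.2 = set0]])) => X.
  have [[oX X0]|] := pselect (open X /\ X !=set0).
    by have [V1 [V2 H]] := split2 X oX X0; exists (V1, V2).
  by move=> H; exists (set0, set0) => oX X0; exfalso; apply: H.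
pose Rn n := iter n (fun X => (sp X).2) V.
have HR : forall n, [/\ open (Rn n), Rn n !=set0 & Rn n `<=` V].
  elim=> [|n [oR R0 RV]] /=; first by split.
  have [_ o2 _ n2 [_ s2 _]] := Hsp _ oR R0.
  by split => //; apply: subset_trans RV.
have dec : forall n k, Rn (k + n)%N `<=` Rn n.
  move=> n; elim=> [//|k IH]; rewrite addSn /=.
  have [oR R0 _] := HR (k + n)%N.
  have [_ _ _ _ [_ s2 _]] := Hsp _ oR R0.
  exact: subset_trans IH.
exists (fun n => (sp (Rn n)).1); split.
  move=> n; have [oR R0 RV] := HR n.
  have [Ho1 _ Hn1 _ [Hs1 _ _]] := Hsp _ oR R0.
  by split => //; apply: subset_trans RV.
have key : forall n m, (n < m)%N -> (sp (Rn n)).1 `&` (sp (Rn m)).1 = set0.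
  move=> n m nm.
  have [oR R0 _] := HR n; have [_ _ _ _ [_ _ d]] := Hsp _ oR R0.
  have [oRm Rm0 _] := HR m; have [_ _ _ _ [s1 _ _]] := Hsp _ oRm Rm0.
  apply/seteqP; split => // x [xn xm]; rewrite -d; split => //.
  have := dec n.+1 (m - n.+1)%N; rewrite subnK// => /(_ x); apply.
  exact: s1.
move=> n m; case: (ltngtP n m) => [nm _|mn _|-> ]; last by move/eqP.
  exact: key.
by rewrite setIC; exact: key.
Qed.

End S.
Section S.
Context {R : realType} {K : topologicalType}.
Hypothesis hK : hausdorff_space K.
Hypothesis cK : compact [set: K].

Lemma bump (W : set K) : open W -> W !=set0 -> exists u : K -> R,
  [/\ continuous u, (forall t, 0 <= u t <= 1), (forall t, ~ W t -> u t = 0) &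
   exists O, [/\ open O, O !=set0, O `<=` W & forall t, O t -> u t = 1]].
Proof.
move=> oW [p Wp].
have reg : {for p, regular_space K}.
  by apply: (@compact_regular _ p setT hK cK); exact: filterT.
have [U [V [oU oV Up WV UV]]] : exists U V : set K,
    [/\ open U, open V, U p, ~` W `<=` V & U `&` V = set0].
  by apply/(regular_openP p).1 => //; exact: open_closedC.
have clU : closure U `<=` W.
  have : closure U `<=` ~` V.
    have -> : ~` V = closure (~` V) by apply/closure_id; exact: open_closedC.
    apply: closureS => x Ux Vx.
    by have : (U `&` V) x by []; rewrite UV.
  move=> H x /H nVx; apply: contra_notP nVx => nWx; exact: WV.
have sep : uniform_separator (~` W) (closure U).
  have := (@normal_separatorP R K).1 (compact_normal hK cK).
  apply; [exact: open_closedC|exact: closed_closure|].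
  apply/seteqP; split => // x [nWx /clU Wx]; exact: nWx.
exists (Urysohn (~` W) (closure U)); split.
- exact: Urysohn_continuous.
- move=> t; have := @Urysohn_range K R (~` W) (closure U) (Urysohn (R:=R) (~` W) (closure U) t).
  by rewrite /= in_itv /=; apply; exists t.
- move=> t nWt; have := Urysohn_sub0 (R:=R) sep.
  by move=> /(_ (Urysohn (~` W) (closure U) t)); apply; exists t.
- exists U; split => //; first by exists p.
    by move=> x Ux; apply: clU; exact: subset_closure.
  move=> t Ut; have := Urysohn_sub1 (R:=R) sep.
  by move=> /(_ (Urysohn (~` W) (closure U) t)); apply; exists t => //; exact: subset_closure.
Qed.

End S.
Lemma lra1 {R : realType} (q e : R) : 0 < e -> q <= q - e / 2 -> False.
Proof. lra. Qed.

Lemma key1_lem {R : realType} (s a : R) : (s = 1 \/ s = -1) -> 0 <= s * a ->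
  `|s + a| = 1 + `|a|.
Proof.
case=> -> H.
  by rewrite mul1r in H; rewrite !ger0_norm //; lra.
rewrite mulN1r oppr_ge0 in H.
by rewrite (ler0_norm H) ler0_norm; lra.
Qed.

Lemma hs_lem {R : realType} (s a : R) : (s = 1 \/ s = -1) -> `|a| <= 1 -> `|s - a| <= 2.
Proof.
move=> s1 ha; apply: le_trans (ler_normB _ _) _.
by case: s1 => ->; rewrite ?normrN normr1; lra.
Qed.

Lemma hb_lem {R : realType} (u b : R) : 0 <= u <= 1 -> `|b| <= 2 -> `|u * b| <= 2.
Proof.
move=> /andP[u0 u1] hb; rewrite normrM ger0_norm //.
have := normr_ge0 b; nra.
Qed.

Lemma Mlem {R : realType} (M s : R) : 0 <= s <= 2 -> M * s <= `|M| * 2.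
Proof.
move=> /andP[s0 s2]; apply: le_trans (ler_norm _) _.
by rewrite normrM (ger0_norm s0) ler_wpM2l.
Qed.

Lemma arch_lem {R : realType} (a B : R) : 0 < a -> B < a *+ (Num.truncn (B / a)).+1.
Proof.
by move=> a0; rewrite -mulr_natr mulrC -ltr_pdivrMr //; exact: truncnS_gt.

Qed.

Lemma e84 {R : realType} (e : R) : 0 < e -> e / 8 < e / 4.
Proof. move=> e0; lra. Qed.

Lemma xlem {R : realType} (a u s : R) : `|a| <= 1 -> 0 <= u <= 1 ->
  (s = 1 \/ s = -1) -> `|a + u * (s - a)| <= 1.
Proof.
move=> ha /andP[u0 u1] s1.
have -> : a + u * (s - a) = (1 - u) * a + u * s by ring.
apply: le_trans (ler_normD _ _) _; rewrite !normrM (ger0_norm u0).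
rewrite ger0_norm; last lra.
have hs : `|s| = 1 by case: s1 => ->; rewrite ?normrN normr1.
rewrite hs mulr1; have := normr_ge0 a; nra.
Qed.

Lemma fin_lem {R : realType} (A B C r e : R) : A = 1 + B -> r <= B -> C < e / 4 ->
  1 + r - e / 4 <= A - C.
Proof. move=> -> *; lra. Qed.

Lemma fin_lem2 {R : realType} (q e : R) : 0 < e ->
  1 + q <= 1 + (q - e / 2) - e / 4 + e.
Proof. move=> *; lra. Qed.

Section Main.
Context {R : realType} {K : topologicalType}.
Variable k0 : K.
Variable T : (K -> R) -> (K -> R).
Hypothesis Tbd : forall x, continuous x -> Defs.bounded_fun (T x).
Hypothesis Tlin : forall (a : R) x y, continuous x -> continuous y ->
  mK (T (a *: x + y) - (a *: T x + T y)).
Variable M : R.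
Hypothesis HM : forall x, continuous x -> (qnorm (T x) <= M%:E * supn x)%E.
Variable x0 : K -> R.
Hypothesis cx0 : continuous x0.
Hypothesis nx0 : ~ mK (T x0).
Variable y : K -> R.
Hypothesis yb : Defs.bounded_fun y.
Hypothesis Hy : forall x, continuous x -> exists c : R, mK (T x - c *: y).

Lemma fin_of (X : \bar R) (a b : R) : (a%:E <= X)%E -> (X <= b%:E)%E ->
  X = (fine X)%:E.
Proof. by case: X. Qed.

Lemma cont_cst (c : R) : continuous (fun _ : K => c).
Proof. exact: cst_continuous. Qed.

Lemma cont_add (f g : K -> R) : continuous f -> continuous g -> continuous (f + g).
Proof. by move=> cf cg t; apply: continuousD; [apply: cf|apply: cg]. Qed.


Lemma cont_scale (c : R) (f : K -> R) : continuous f -> continuous (c *: f).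
Proof. by move=> cf t; apply: continuousZl_tmp; apply: cf. Qed.

Lemma cont_sum N (F : 'I_N -> K -> R) : (forall i, continuous (F i)) ->
  continuous (\sum_(i < N) F i).
Proof.
elim: N F => [|N IH] F cF; first by rewrite big_ord0; exact: cont_cst.
rewrite big_ord_recr /=; apply: cont_add; last exact: cF.
by apply: IH => i; exact: cF.
Qed.

Lemma cont0 : continuous (0 : K -> R).
Proof. exact: cont_cst. Qed.

Lemma mKT0 : mK (T 0).
Proof.
have := @Tlin 1 0 0 cont0 cont0; rewrite !scale1r addr0.
have -> : T 0 - (T 0 + T 0) = - T 0 by rewrite opprD addrA subrr add0r.
by move/mKN; rewrite opprK.
Qed.

Lemma y_notmK : ~ mK y.
Proof.
move=> my; have [c Hc] := Hy _ cx0; apply: nx0.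
have -> : T x0 = (T x0 - c *: y) + c *: y by rewrite subrK.
by apply: mKD => //; exact: mKZ.
Qed.

Lemma coef_uniq x (a b : R) : mK (T x - a *: y) -> mK (T x - b *: y) -> a = b.
Proof.
move=> ha hb; apply/eqP; apply: contra_notT y_notmK => ab.
have : mK ((b - a) *: y).
  have -> : (b - a) *: y = (T x - a *: y) - (T x - b *: y).
    by rewrite scalerBl opprB [RHS]addrC [RHS]addrA subrK.
  exact: mKB.
move/(mKZ (b - a)^-1); rewrite scalerA mulVf ?scale1r //.
by rewrite subr_eq0 eq_sym.
Qed.

Lemma lin_sum N (h : 'I_N -> K -> R) (eps : 'I_N -> R) :
  (forall i, continuous (h i)) ->
  mK (T (\sum_(i < N) eps i *: h i) - \sum_(i < N) eps i *: T (h i)).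
Proof.
elim: N h eps => [|N IH] h eps ch.
  by rewrite !big_ord0 subr0; exact: mKT0.
rewrite !big_ord_recr /=.
set X := \sum_(i < N) _.
have cX : continuous X.
  by apply: cont_sum => i; apply: cont_scale; exact: ch.
have := Tlin (eps ord_max) _ _ (ch ord_max) cX.
have := IH (fun i => h (widen_ord (leqnSn N) i)) (fun i => eps (widen_ord (leqnSn N) i)).
move=> /(_ (fun i => ch _)) H1 H2.
rewrite (addrC X).
set A := T _; set B := eps ord_max *: T (h ord_max); set D := \sum_(i < N) _.
have -> : A - (D + B) = (A - (B + T X)) + (T X - D) by ring.
exact: mKD H2 H1.
Qed.

Lemma cont_mul (f g : K -> R) : continuous f -> continuous g -> continuous (f * g).
Proof. by move=> cf cg t; apply: continuousM; [apply: cf|apply: cg]. Qed.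

Lemma cont_sub (f g : K -> R) : continuous f -> continuous g -> continuous (f - g).
Proof. by move=> cf cg t; apply: continuousB; [apply: cf|apply: cg]. Qed.

Lemma mK_sum N (F : 'I_N -> K -> R) : (forall i, mK (F i)) -> mK (\sum_(i < N) F i).
Proof.
move=> mF; apply: (big_ind mK); [exact: mK0|exact: mKD|].
by move=> i _; exact: mF.
Qed.

Lemma qnorm_addl (f F : K -> R) (s : R) : supn f = s%:E ->
  (qnorm (f + F)%R <= s%:E + qnorm F)%E.
Proof.
move=> sf; rewrite -leeBlDl//; apply/ereal_infP => _ [g mg <-].
rewrite leeBlDl//; apply: le_trans (qnorm_le (f + F) g mg) _.
have -> : (f + F - g) = f + (F \- g) by rewrite addrA.
by rewrite -sf; exact: supnD.
Qed.

Hypothesis hK : hausdorff_space K.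
Hypothesis cK : compact [set: K].
Hypothesis noiso : forall x : K, ~ open [set x].

Lemma core (x' : K -> R) (e : R) : continuous x' -> (supn x' <= 1)%E -> 0 < e ->
  exists x, [/\ continuous x, (supn x <= 1)%E &
    (1 + qnorm (T x') <= qnorm (x + T x)%R + e%:E)%E].
Proof.
move=> cx' sx' e0.
have x'b : forall t, `|x' t| <= 1.
  by move=> t; rewrite -lee_fin; apply: le_trans (supn_ub x' t) sx'.
set f := T x'.
have [Mf HMf] := Tbd _ cx'.
have [Mq HMq] := qnorm_bd _ (Tbd _ cx').
have qE := fin_of _ _ _ (qnorm_ge0 k0 f) HMq.

set q := fine (qnorm f) in qE.
rewrite qE.
pose r := q - e / 2.
pose A := [set t | r <= `|f t|].
have nA : ~ first_category A.
  case: (lerP r 0) => r0 fA.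
    apply: nx0; split; first exact: Tbd.
    apply: (fc_sub _ fA) => t _; rewrite /A /=.
    by apply: le_trans r0 _; exact: normr_ge0.
  pose g := fun t => if r <= `|f t| then f t else 0.
  have mg : mK g.
    split.
      exists Mf => t; rewrite /g; case: ifP => _; first exact: HMf.
      by rewrite normr0; exact: le_trans (normr_ge0 _) (HMf t).
    apply: (fc_sub _ fA) => t; rewrite /supp /g /=.
    by case: ifP => // _; rewrite eqxx.
  have H1 := qnorm_le f g mg; rewrite qE in H1.
  have H2 : (supn (f - g)%R <= r%:E)%E.

    apply: supn_le => t.
    have -> : (f - g) t = f t - g t by [].
    rewrite /g; case: ifP => H.
      by rewrite subrr normr0; exact: ltW.
    by rewrite subr0; apply: ltW; rewrite ltNge H.


  have := le_trans H1 H2; rewrite lee_fin /r => H3.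
  exact: lra1 e0 H3.

pose As (s : R) := [set t | r <= `|f t| /\ 0 <= s * f t].
have [s [s1 nAs]] : exists s : R, (s = 1 \/ s = -1) /\ ~ first_category (As s).
  apply: contra_notP nA => H.
  have f1 : first_category (As 1).
    by apply: contrapT => H'; apply: H; exists 1; split; [left|exact: H'].
  have f2 : first_category (As (-1)).
    by apply: contrapT => H'; apply: H; exists (-1); split; [right|exact: H'].

  apply: (fc_sub _ (fcU f1 f2)) => t At; rewrite /As /=.
  case: (lerP 0 (f t)) => ft.
    by apply: or_introl; split => //; rewrite mul1r.
  by apply: or_intror; split => //; rewrite mulN1r oppr_ge0; exact: ltW.

have key1 : forall t, As s t -> `|s + f t| = 1 + `|f t|.
  by move=> t [_]; exact: key1_lem.
have [V [oV V0 HV]] := banach _ nAs.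
have [W [HW Wdisj]] := pieces hK noiso _ oV V0.
have [uO HuO] : {uO : nat -> (K -> R) * set K & forall i,
   [/\ continuous (uO i).1, (forall t, 0 <= (uO i).1 t <= 1),
       (forall t, ~ W i t -> (uO i).1 t = 0) &
   [/\ open (uO i).2, (uO i).2 !=set0, (uO i).2 `<=` W i &
       forall t, (uO i).2 t -> (uO i).1 t = 1]]}.
  apply: (@choice _ _ (fun i (p : (K -> R) * set K) =>
   [/\ continuous p.1, (forall t, 0 <= p.1 t <= 1),
       (forall t, ~ W i t -> p.1 t = 0) &
   [/\ open p.2, p.2 !=set0, p.2 `<=` W i &
       forall t, p.2 t -> p.1 t = 1]])) => i.
  have [oW W0 _] := HW i.
  have [u [cu Hu01 Hu0 [Ob [oO HO0 OW HO1]]]] := bump (R:=R) hK cK _ oW W0.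
  by exists (u, Ob).
pose u i := (uO i).1.
pose Op i := (uO i).2.
pose h i : K -> R := u i * (fun=> s) - u i * x'.
have hE : forall i t, h i t = u i t * (s - x' t).
  by move=> i t; rewrite /h /= mulrBr.
have ch : forall i, continuous (h i).
  move=> i; have [cu _ _ _] := HuO i.
  by apply: cont_sub; apply: cont_mul => //; exact: cont_cst.
have hb : forall i t, `|h i t| <= 2.
  move=> i t; rewrite hE; have [_ Hu01 _ _] := HuO i.
  by apply: hb_lem; [exact: Hu01|exact: hs_lem].

have h0 : forall i t, ~ W i t -> h i t = 0.
  by move=> i t nW; rewrite hE; have [_ _ Hu0 _] := HuO i; rewrite /u Hu0 ?mul0r.

have [c Hc] : {c : (K -> R) -> R & forall x, continuous x -> mK (T x - c x *: y)}.
  apply: (@choice _ _ (fun x a => continuous x -> mK (T x - a *: y))) => x.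
  have [cx|ncx] := pselect (continuous x).
    by have [a Ha] := Hy _ cx; exists a.
  by exists 0.
have yE := fin_of _ _ _ (qnorm_ge0 k0 y) (projT2 (cid (qnorm_bd _ yb))).
set sy := fine (qnorm y) in yE.
have sy0 : 0 <= sy by rewrite -lee_fin -yE; exact: qnorm_ge0.
have qTx : forall x, continuous x -> qnorm (T x) = (`|c x| * sy)%:E.
  move=> x cx.
  have -> : T x = c x *: y + (T x - c x *: y) by rewrite addrC subrK.
  rewrite qnorm_inv; last exact: Hc.
  by rewrite (qnormZ k0) yE.
have sumb : forall N, \sum_(i < N) `|c (h i)| * sy <= `|M| * 2.
  move=> N.
  pose eps (i : 'I_N) : R := if 0 <= c (h i) then 1 else -1.
  pose H := \sum_(i < N) eps i *: h i.
  have cH : continuous H by apply: cont_sum => i; apply: cont_scale; exact: ch.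
  have sH : forall t, `|H t| <= 2.
    move=> t; have -> : H t = \sum_(i < N) eps i * h i t by rewrite /H fct_sumE.
    case: (pselect (exists j : 'I_N, W j t)) => [[j Wj]|nW].
      rewrite (bigD1 j) //= big1 ?addr0.
        rewrite normrM /eps; case: ifP => _; rewrite ?normrN normr1 mul1r; exact: hb.
      move=> i ij; rewrite h0 ?mulr0 // => Wi.
      have : (W i `&` W j) t by [].
      by rewrite Wdisj.
    by rewrite big1 ?normr0 // => i _; rewrite h0 ?mulr0 // => Wi; apply: nW; exists i.
  have sH0 : (0 <= supn H)%E by exact: supn_ge0.
  have sHE := fin_of _ _ _ sH0 (supn_le _ _ sH).
  have mkH : mK (T H - (\sum_(i < N) eps i * c (h i)) *: y).
    have -> : T H - (\sum_(i < N) eps i * c (h i)) *: y =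
        (T H - \sum_(i < N) eps i *: T (h i)) +
        \sum_(i < N) eps i *: (T (h i) - c (h i) *: y).
      have -> : \sum_(i < N) eps i *: (T (h i) - c (h i) *: y) =
          \sum_(i < N) eps i *: T (h i) - \sum_(i < N) (eps i * c (h i)) *: y.
        by rewrite -sumrB; apply: eq_bigr => i _; rewrite scalerBr scalerA.
      rewrite -scaler_suml.
      set S1 := \sum_(i < N) _ *: T _; set S2 := (\sum_(i < N) _) *: y.
      ring.
    apply: mKD; first by apply: lin_sum => i; exact: ch.
    by apply: mK_sum => i; apply: mKZ; apply: Hc; exact: ch.
  have epsc : \sum_(i < N) eps i * c (h i) = \sum_(i < N) `|c (h i)|.
    apply: eq_bigr => i _; rewrite /eps; case: ifP => H0.
      by rewrite mul1r ger0_norm.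
    by rewrite mulN1r ltr0_norm // ltNge H0.
  have qH : qnorm (T H) = ((\sum_(i < N) `|c (h i)|) * sy)%:E.
    have -> : T H = (\sum_(i < N) eps i * c (h i)) *: y +
      (T H - (\sum_(i < N) eps i * c (h i)) *: y) by rewrite addrC subrK.
    rewrite qnorm_inv // (qnormZ k0) yE epsc ger0_norm //.
    by apply: sumr_ge0 => i _.
  have := HM _ cH; rewrite qH sHE -EFinM lee_fin => H1.
  rewrite -mulr_suml; apply: le_trans H1 _; apply: Mlem.
  by rewrite -!lee_fin -sHE sH0 /=; exact: supn_le.
have [i hi] : exists i, `|c (h i)| * sy <= e / 8.
  apply: contrapT => H.
  have Hall : forall i, e / 8 < `|c (h i)| * sy.
    by move=> i; rewrite ltNge; apply/negP => Hi; apply: H; exists i.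
  have e8 : 0 < e / 8 by rewrite divr_gt0 // ltr0n.
  have := arch_lem (e / 8) (`|M| * 2) e8.
  set N := (Num.truncn _).+1 => HN.
  have := sumb N.
  have : \sum_(j < N) (e / 8) <= \sum_(j < N) `|c (h j)| * sy.
    by apply: ler_sum => j _; exact: ltW (Hall j).
  rewrite sumr_const card_ord => H1 H2.
  by have := lt_le_trans HN (le_trans H1 H2); rewrite ltxx.
have [Hcu Hu01 Hu0 [oO HO0 OW HO1]] := HuO i.
have qhi : (qnorm (T (h i)) < (e / 4)%:E)%E.
  by rewrite qTx ?ch // lte_fin; apply: le_lt_trans hi _; exact: e84.
have [_ [g mg <-] gb] := ereal_inf_lt qhi.
have gpt : forall t, `|T (h i) t - g t| < e / 4.
  by move=> t; rewrite -lte_fin; apply: le_lt_trans (supn_ub _ t) gb.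
pose x := x' + h i.
have cx : continuous x by apply: cont_add => //; exact: ch.
exists x; split => //.
  apply: supn_le => t.
  have -> : x t = x' t + u i t * (s - x' t) by rewrite -hE.

  by apply: xlem; [exact: x'b|exact: Hu01|exact: s1].
have m1 := Tlin 1 _ _ cx' (ch i); rewrite !scale1r in m1.
have HVi : ~ first_category (As s `&` Op i).
  have [_ _ WV] := HW i.
  by apply: HV => //; apply: subset_trans WV.
pose D := [set t | (As s `&` Op i) t /\ g t = 0 /\ (T x - (f + T (h i))) t = 0].
have nD : ~ first_category D.
  move=> fD; apply: HVi.
  apply: (fc_sub _ (fcU fD (fcU mg.2 m1.2))) => t At.
  case: (eqVneq (g t) 0) => gt; last by apply: or_intror; apply: or_introl.
  case: (eqVneq ((T x - (f + T (h i))) t) 0) => mt.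
    by apply: or_introl; split => //; split; apply/eqP.
  by apply: or_intror; apply: or_intror.
have LB := qnorm_LB D (x + T x) (1 + r - e / 4) nD.
have LB' : ((1 + r - e / 4)%:E <= qnorm (x + T x)%R)%E.
  apply: LB => t [[[Ar fs] Ot] [gt mt]].
  have xt : x t = s.
    have -> : x t = x' t + u i t * (s - x' t) by rewrite -hE.
    rewrite /u HO1 //; ring.

  have Tt : T x t = f t + T (h i) t.
    by apply/eqP; rewrite -subr_eq0; apply/eqP; exact: mt.
  have -> : (x + T x) t = (s + f t) + T (h i) t.
    by have -> : (x + T x) t = x t + T x t by []; rewrite xt Tt addrA.

  apply: le_trans (lerB_normD _ _).
  apply: fin_lem; first exact: (key1 t (conj Ar fs)).
    exact: Ar.

  by have := gpt t; rewrite gt subr0.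
apply: le_trans (leeD LB' (lexx e%:E)).
by rewrite -!EFinD lee_fin /r; exact: fin_lem2.



Qed.

End Main.

Theorem mainTheorem9 (R : realType) (K : topologicalType)
  (hK : hausdorff_space K) (cK : compact [set: K])
  (noiso : forall x : K, ~ open [set x])
  (T : (K -> R) -> (K -> R)) (hT : rank_one_op T) :
  opnorm (R := R) (fun x => x + T x) = (1 + opnorm T)%E.
Proof.
case: hT => Tbd Tlin [M HM] [x0 cx0 nx0] [y yb Hy].
have [k0 _] : exists k : K, True.
  apply: contrapT => nK; apply: nx0; split; first exact: Tbd.
  by apply: (fc_sub _ fc0) => t _; apply: nK; exists t.
apply/eqP; rewrite eq_le; apply/andP; split.
  apply/ereal_supP => _ [x [cx sx] <-] /=.
  have sxE := fin_of _ _ _ (supn_ge0 k0 x) sx.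
  apply: le_trans (qnorm_addl _ _ _ sxE) _.
  apply: leeD; first by rewrite -sxE.
  by apply: ereal_sup_ubound; exists x.
rewrite -leeBrDl //; apply/ereal_supP => _ [x' [cx' sx'] <-].
rewrite leeBrDl //; apply/lee_addgt0Pr => e e0.
have [x [cx sx H]] :=
  @core R K k0 T Tbd Tlin M HM x0 cx0 nx0 y yb Hy hK cK noiso x' e cx' sx' e0.
apply: le_trans H _; apply: leeD => //.
by apply: ereal_sup_ubound; exists x.
Qed.
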